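(* For $f\in L^2(\mathbb{S}^1,\mathbb{C})$, identified with a $1$-periodic function on $\mathbb{R}$ via $z=e^{2\pi i\phi}$, define \[ \mathcal{T}f(\phi)=\frac12\Big[f\big(\tfrac{\phi}{2}\big)+f\big(\tfrac{\phi+1}{2}\big)\Big]+\frac{e^{\pi i\phi}}{2}\Big[f\big(\tfrac{3\phi}{2}\big)-f\big(\tfrac{3\phi+1}{2}\big)\Big]. \] Then Lebesgue measure $dx$ on $\mathbb{S}^1\cong[0,1)$ is invariant for $\mathcal{T}$: \[ \int_{\mathbb{S}^1}\mathcal{T}f\,dx=\int_{\mathbb{S}^1}f\,dx\quad\text{for all }f\in L^2(\mathbb{S}^1,\mathbb{C}). \]
   Context: $\mathbb{S}^1$ is the unit circle, parametrized by $\phi\in[0,1)$, and functions on it are identified with $1$-periodic functions on $\mathbb{R}$. This operator is the restriction to the unit circle of the operator $\sum a_nz^n\mapsto\sum a_nz^{T(n)}$, where $T$ is the Collatz map $T(n)=\frac{3n+1}2$ ($n$ odd), $T(n)=\frac n2$ ($n$ even). *)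

(* Defs.v *)
From HB Require Import structures.
From mathcomp Require Import all_boot all_order all_algebra.
From mathcomp Require Import all_classical all_reals all_analysis.
From mathcomp Require Import complex.
Set Implicit Arguments. Unset Strict Implicit. Unset Printing Implicit Defensive.
Import Order.TTheory GRing.Theory Num.Theory.
Local Open Scope classical_set_scope.
Local Open Scope ring_scope.

Definition cexpi (R : realType) (t : R) : R[i] := Complex (cos t) (sin t).

Definition L2_circle (R : realType) (f : R -> R[i]) : Prop :=
  (forall x : R, f (x + 1) = f x) /\
  measurable_fun setT (fun x => complex.Re (f x)) /\
  measurable_fun setT (fun x => complex.Im (f x)) /\
  (@lebesgue_measure R).-integrable `[0, 1[
     (fun x => ((complex.Re (f x)) ^+ 2 + (complex.Im (f x)) ^+ 2)%:E).

Definition circle_integral (R : realType) (f : R -> R[i]) : R[i] :=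
  Complex (Rintegral (@lebesgue_measure R) `[0, 1[ (fun x => complex.Re (f x)))
          (Rintegral (@lebesgue_measure R) `[0, 1[ (fun x => complex.Im (f x))).

Definition collatzT (R : realType) (f : R -> R[i]) (phi : R) : R[i] :=
  (Complex (2^-1 : R) 0) * (f (phi / 2) + f ((phi + 1) / 2))
  + (cexpi (pi * phi) * (Complex (2^-1 : R) 0))
      * (f (3 * phi / 2) - f ((3 * phi + 1) / 2)).

(* Main.v *)
Require Import Defs.
From HB Require Import structures.
From mathcomp Require Import all_boot all_order all_algebra.
From mathcomp Require Import all_classical all_reals all_analysis.
From mathcomp Require Import complex.
From mathcomp Require Import lra ring measurable_realfun.
Set Implicit Arguments. Unset Strict Implicit. Unset Printing Implicit Defensive.
Import Order.TTheory GRing.Theory Num.Theory.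
Import numFieldNormedType.Exports.
Local Open Scope classical_set_scope.
Local Open Scope ring_scope.

Section CV.
Context {R : realType}.
Local Notation Leb := (@lebesgue_measure R).

Lemma aff_mfun (a b : R) : measurable_fun (T:=measurableTypeR R) (U:=measurableTypeR R) [set: R] (fun x : R => a * x + b).
Proof.
apply: measurable_funD => //.
Qed.

Lemma aff_meas (a b : R) (a0 : 0 < a) (A : set R) : measurable A ->
  Leb A = ((a%:E) * Leb ((fun x => a * x + b)%R @^-1` A))%E.
Proof.
move=> mA.
have := @lebesgue_measure_unique R (mscale (NngNum (ltW a0)) (measure_function_pushforward__canonical__measure_function_Measure Leb (aff_mfun a b))).
move=> H; rewrite H //.
move=> X [[p q]] _ <-.
apply: (@eq_trans _ _ (a%:E * Leb ((fun x => a * x + b)%R @^-1` `]p, q]))%E); last by [].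
have -> : (fun x => a * x + b) @^-1` `]p, q] = `](p - b) / a, (q - b) / a]%classic.
  apply/seteqP; split => x /=; rewrite !in_itv/= ltr_pdivrMr// ler_pdivlMr//.
    by move=> /andP[h1 h2]; apply/andP; split; lra.
  by move=> /andP[h1 h2]; apply/andP; split; lra.
rewrite !lebesgue_measure_itv/= !lte_fin ltr_pM2r ?invr_gt0// ltrD2r.
case: ifPn => pq; rewrite ?mule0//.
rewrite -!EFinD -EFinM; congr (_%:E); field; exact: lt0r_neq0.
Qed.


Local Notation aff a b := (fun x : R => a * x + b).

Lemma ge0_cv (a b : R) (a0 : 0 < a) (D : set R) (G : R -> \bar R) :
  measurable D -> measurable_fun setT G -> (forall x, (0 <= G x)%E) ->
  (\int[Leb]_(x in D) G x =
   a%:E * \int[Leb]_(x in (aff a b) @^-1` D) G (a * x + b)%R)%E.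
Proof.
move=> mD mG G0.
rewrite (@eq_measure_integral _ _ _ _ (mscale (NngNum (ltW a0)) (measure_function_pushforward__canonical__measure_function_Measure Leb (aff_mfun a b)))); last first.
  by move=> A mA _; exact: aff_meas.
rewrite ge0_integral_mscale//; last exact: measurable_funTS.
congr (_ * _)%E.
rewrite (@ge0_integral_pushforward _ _ _ _ _ _ (aff_mfun a b))//.
  exact: measurable_funTS.
Qed.

Lemma aff_pre_meas (a b : R) (D : set R) : measurable D -> @measurable _ (measurableTypeR R) (aff a b @^-1` D).
Proof. by move=> mD; have := aff_mfun a b measurableT mD; rewrite setTI. Qed.

Lemma cv_integrable (a b : R) (a0 : 0 < a) (D : set R) (g : R -> R) :
  measurable D -> measurable_fun setT g -> Leb.-integrable D (EFin \o g) ->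
  Leb.-integrable (aff a b @^-1` D) (EFin \o (fun x => g (a * x + b))).
Proof.
move=> mD mg /integrableP[_ ig]; apply/integrableP; split.
  apply/measurable_EFinP; apply: measurable_funTS.
  exact: (measurableT_comp mg (aff_mfun a b)).
have := ge0_cv b a0 mD (G := fun x => (`|g x|)%:E).
move=> H; rewrite H// in ig; last first.
  by apply/measurable_EFinP; apply: measurableT_comp.
set X := (\int[Leb]_(x in _) _)%E in ig.
rewrite (_ : (\int[Leb]_(x in _) _)%E = X)//.
have -> : X = (a^-1%:E * (a%:E * X))%E.
  by rewrite muleA -EFinM mulVf ?mul1e// lt0r_neq0.
apply: lte_mul_pinfty => //; rewrite lee_fin invr_ge0; exact: ltW.
Qed.

Lemma cv_Rint (a b : R) (a0 : 0 < a) (D : set R) (g : R -> R) :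
  measurable D -> measurable_fun setT g -> Leb.-integrable D (EFin \o g) ->
  Rintegral Leb D g = a * Rintegral Leb (aff a b @^-1` D) (fun x => g (a * x + b)).
Proof.
move=> mD mg ig.
have ig' := cv_integrable b a0 mD mg ig.
have mpre := aff_pre_meas a b mD.
rewrite /Rintegral [X in _ = X * _](_ : a = fine a%:E)// -fineM//; last exact: integrable_fin_num.
congr fine.
have HP := ge0_cv b a0 mD (G := ((EFin \o g)^\+)%E)
  (measurable_funepos (proj2 (measurable_EFinP _ _) mg)) (fun x => funepos_ge0 _ x).
have HN := ge0_cv b a0 mD (G := ((EFin \o g)^\-)%E)
  (measurable_funeneg (proj2 (measurable_EFinP _ _) mg)) (fun x => funeneg_ge0 _ x).
transitivity (a%:E * \int[Leb]_(x in aff a b @^-1` D) ((EFin \o g) \o aff a b) x)%E; last by [].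
rewrite (_ : (\int[Leb]_(x in D) (g x)%:E)%E = \int[Leb]_(x in D) (EFin \o g) x)%E//.
rewrite integralE [X in (_ * X)%E]integralE (funepos_comp (EFin \o g) (aff a b)) (funeneg_comp (EFin \o g) (aff a b)) HP HN.
rewrite -muleBr//.
apply: fin_num_adde_defl; rewrite fin_numN.
have := integrable_neg_fin_num mpre ig'.
by rewrite (funeneg_comp (EFin \o g) (aff a b)).
Qed.

Lemma pre_itv (a b c d : R) : 0 < a ->
  aff a b @^-1` `[c, d[%classic = `[(c - b) / a, (d - b) / a[%classic.
Proof.
move=> a0; apply/seteqP; split => x /=; rewrite !in_itv/= ler_pdivrMr// ltr_pdivlMr//.
  by move=> /andP[h1 h2]; apply/andP; split; lra.
by move=> /andP[h1 h2]; apply/andP; split; lra.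
Qed.

Lemma itv_disj (p q r : R) : [disjoint `[p, q[%classic & `[q, r[%classic].
Proof.
apply/disj_setPS => x [] /=; rewrite !in_itv/= => /andP[_ h1] /andP[h2 _].
lra.
Qed.

Lemma itv_split (p q r : R) : p <= q -> q <= r ->
  `[p, r[%classic = `[p, q[%classic `|` `[q, r[%classic.
Proof.
move=> pq qr; apply: itv_bndbnd_setU; by rewrite bnd_simp.
Qed.

Lemma int_sub (p q p' q' : R) (h : R -> R) : p <= p' -> q' <= q ->
  Leb.-integrable `[p, q[ (EFin \o h) -> Leb.-integrable `[p', q'[ (EFin \o h).
Proof.
move=> h1 h2; apply: integrableS => //.
by apply: subset_itv; rewrite bnd_simp.
Qed.

Lemma int_union (p q r : R) (h : R -> R) : p <= q -> q <= r ->
  measurable_fun setT h ->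
  Leb.-integrable `[p, q[ (EFin \o h) -> Leb.-integrable `[q, r[ (EFin \o h) ->
  Leb.-integrable `[p, r[ (EFin \o h).
Proof.
move=> pq qr mh /integrableP[_ i1] /integrableP[_ i2].
apply/integrableP; split.
  by apply/measurable_EFinP; apply: measurable_funTS.
rewrite (itv_split pq qr) ge0_integral_setU//; last exact: itv_disj.
- exact: lte_add_pinfty.
- apply: measurable_funTS; apply/measurable_EFinP.
  exact: measurableT_comp.
Qed.

Lemma Rint_split (p q r : R) (h : R -> R) : p <= q -> q <= r ->
  Leb.-integrable `[p, r[ (EFin \o h) ->
  Rintegral Leb `[p, r[ h = Rintegral Leb `[p, q[ h + Rintegral Leb `[q, r[ h.
Proof.
move=> pq qr ih; rewrite (itv_split pq qr) Rintegral_setU//; last exact: itv_disj.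
by rewrite -(itv_split pq qr).
Qed.

Lemma Rint_cv (a b c d p q : R) (h : R -> R) : 0 < a ->
  p = a * c + b -> q = a * d + b -> measurable_fun setT h ->
  Leb.-integrable `[p, q[ (EFin \o h) ->
  Rintegral Leb `[p, q[ h = a * Rintegral Leb `[c, d[ (fun x => h (a * x + b)).
Proof.
move=> a0 -> -> mh ih; rewrite (cv_Rint b a0 _ mh ih)// pre_itv//.
have -> : (a * c + b - b) / a = c by field; exact: lt0r_neq0.
have -> : (a * d + b - b) / a = d by field; exact: lt0r_neq0.
by [].
Qed.

Lemma int_cv (a b c d p q : R) (h : R -> R) : 0 < a ->
  p = a * c + b -> q = a * d + b -> measurable_fun setT h ->
  Leb.-integrable `[p, q[ (EFin \o h) ->
  Leb.-integrable `[c, d[ (EFin \o (fun x => h (a * x + b))).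
Proof.
move=> a0 -> -> mh ih; have := cv_integrable b a0 _ mh ih; rewrite pre_itv//.
have -> : (a * c + b - b) / a = c by field; exact: lt0r_neq0.
have -> : (a * d + b - b) / a = d by field; exact: lt0r_neq0.
by apply.
Qed.
End CV.
From HB Require Import structures.
From mathcomp Require Import all_boot all_order all_algebra.
From mathcomp Require Import all_classical all_reals all_analysis.
From mathcomp Require Import complex.
From mathcomp Require Import lra ring measurable_realfun.
Set Implicit Arguments. Unset Strict Implicit. Unset Printing Implicit Defensive.
Import Order.TTheory GRing.Theory Num.Theory.
Import numFieldNormedType.Exports.
Local Open Scope classical_set_scope.
Local Open Scope ring_scope.

Section Per.
Context {R : realType}.
Local Notation Leb := (@lebesgue_measure R).
Variable g : R -> R.
Hypothesis gP : forall x, g (x + 1) = g x.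
Hypothesis gm : measurable_fun setT g.
Hypothesis gi : Leb.-integrable `[0, 1[ (EFin \o g).

Lemma gi2 : Leb.-integrable `[0, 2[ (EFin \o g).
Proof.
apply: (@int_union _ 0 1) => //; first exact: ler1n.
have := @int_cv _ 1 (-1) 1 2 0 1 g ltr01.
move=> /(_ ltac:(ring) ltac:(ring) gm gi).
apply: (@eq_integrable _ _ _ Leb _ (measurable_itv _) (EFin \o (fun x => g (1 * x + -1)))) => //= x _.
by rewrite mul1r -(gP (x + -1)) addrNK.
Qed.

Lemma gi_sub p q : 0 <= p -> q <= 2 -> Leb.-integrable `[p, q[ (EFin \o g).
Proof. by move=> hp hq; apply: int_sub hp hq gi2. Qed.

Variable c : R -> R.
Hypothesis cm : measurable_fun setT c.
Hypothesis cb : forall y, `|c y| <= 1.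

Definition W (al be : R) := fun x => c (al * x + be) * g x.

Lemma Wm al be : measurable_fun setT (W al be).
Proof.
apply: measurable_funM => //.
exact: (measurableT_comp cm (aff_mfun al be)).
Qed.

Lemma Wi al be p q : 0 <= p -> q <= 2 ->
  Leb.-integrable `[p, q[ (EFin \o W al be).
Proof.
move=> hp hq.
have mh : measurable_fun `[p, q[ (fun x => c (al * x + be)).
  apply: measurable_funTS; exact: (measurableT_comp cm (aff_mfun al be)).
have bh : [bounded c (al * x + be) | x in `[p, q[].
  exists 1; split; first exact: num_real.
  move=> M /ltW M1 x _; exact: le_trans (cb _) M1.
have := @integrableMr _ _ _ Leb `[p, q[ (measurable_itv _) (fun x => c (al * x + be)) (EFin \o g) mh bh (gi_sub hp hq).
by apply: eq_integrable => //= x _.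
Qed.


Lemma partA :
  Rintegral Leb `[0, 1[ (fun x => g (x / 2)) + Rintegral Leb `[0, 1[ (fun x => g ((x + 1) / 2))
  = 2 * Rintegral Leb `[0, 1[ g.
Proof.
have h2 : (0 : R) < 2^-1 by rewrite invr_gt0.
have h21 : (2^-1 : R) <= 1 by rewrite invf_le1// ler1n.
have h22 : (2^-1 : R) <= 2 by apply: le_trans h21 _; rewrite ler1n.
rewrite [in RHS](@Rint_split _ 0 (2^-1) 1 g) //.
have -> : Rintegral Leb `[0, 2^-1[ g = 2^-1 * Rintegral Leb `[0, 1[ (fun x => g (2^-1 * x + 0)).
  apply: Rint_cv => //; [ring|ring|].
  exact: gi_sub.
have -> : Rintegral Leb `[2^-1, 1[ g = 2^-1 * Rintegral Leb `[0, 1[ (fun x => g (2^-1 * x + 2^-1)).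
  apply: Rint_cv => //; [ring|by field|].
  by apply: gi_sub; [exact: ltW| rewrite ler1n].
rewrite mulrDr !mulrA mulfV ?mul1r//.
by congr (_ + _); apply: eq_Rintegral => x _; congr g; field.
Qed.

Lemma Wshift al be p q p1 q1 : p1 = p + 1 -> q1 = q + 1 -> 0 <= p -> q + 1 <= 2 ->
  Rintegral Leb `[p1, q1[ (W al be) = Rintegral Leb `[p, q[ (W al (al + be)).
Proof.
move=> -> -> hp hq.
rewrite (@Rint_cv _ 1 1 p q) ?mul1r//; last first.
  by apply: Wi => //; apply: addr_ge0.
  exact: Wm.
apply: eq_Rintegral => x _; rewrite /W mul1r gP; congr (c _ * _); ring.
Qed.

Hypothesis c1 : forall y, c y + c (y + 2 * (pi / 3)) = c (y + pi / 3).
Hypothesis c2 : forall y, c y = c (y - pi / 3) + c (y + pi / 3).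

Lemma partB :
  Rintegral Leb `[0, 1[ (fun x => c (pi * x) * g (3 / 2 * x)) =
  Rintegral Leb `[0, 1[ (fun x => c (pi * x) * g (3 / 2 * x + 2^-1)).
Proof.
pose k : R := 2 * pi / 3; pose t : R := pi / 3.
have n1 : (0 : R) < 3 / 2 by lra.
have n2 : (0 : R) <= 2^-1 by lra.
have n3 : (2^-1 : R) <= 1 by lra.
have n4 : (1 : R) <= 3 / 2 by lra.
have n5 : (3 / 2 : R) <= 2 by lra.
have n6 : (1 : R) <= 2 by lra.
have E1 : Rintegral Leb `[0, 3 / 2[ (W k 0) =
    3 / 2 * Rintegral Leb `[0, 1[ (fun x => c (pi * x) * g (3 / 2 * x)).
  rewrite (@Rint_cv _ (3 / 2) 0 0 1)//; [|ring|ring|exact: Wm|exact: Wi].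
  congr (_ * _); apply: eq_Rintegral => x _; rewrite /W /k.
  by congr (c _ * g _); field.
have E2 : Rintegral Leb `[2^-1, 2[ (W k (- t)) =
    3 / 2 * Rintegral Leb `[0, 1[ (fun x => c (pi * x) * g (3 / 2 * x + 2^-1)).
  rewrite (@Rint_cv _ (3 / 2) (2^-1) 0 1)//; [|by field|by field|exact: Wm|exact: Wi].
  congr (_ * _); apply: eq_Rintegral => x _; rewrite /W /k /t.
  by congr (c _ * g _); field.
have S1 : Rintegral Leb `[0, 3 / 2[ (W k 0) = Rintegral Leb `[0, 2^-1[ (W k 0)
    + Rintegral Leb `[2^-1, 1[ (W k 0) + Rintegral Leb `[1, 3 / 2[ (W k 0).
  rewrite (@Rint_split _ 0 (2^-1) (3 / 2)) //; last 2 first.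
  - exact: le_trans n3 n4.
  - exact: Wi.
  rewrite (@Rint_split _ (2^-1) 1 (3 / 2)) ?addrA//.
  exact: Wi.
have S2 : Rintegral Leb `[2^-1, 2[ (W k (- t)) = Rintegral Leb `[2^-1, 1[ (W k (- t))
    + Rintegral Leb `[1, 3 / 2[ (W k (- t)) + Rintegral Leb `[3 / 2, 2[ (W k (- t)).
  rewrite (@Rint_split _ (2^-1) 1 2) //; last by exact: Wi.
  rewrite (@Rint_split _ 1 (3 / 2) 2) ?addrA//.
  exact: Wi.
have Sh1 : Rintegral Leb `[1, 3 / 2[ (W k 0) = Rintegral Leb `[0, 2^-1[ (W k (k + 0)).
  apply: Wshift => //; [ring|by field|lra].
have Sh2 : Rintegral Leb `[1, 3 / 2[ (W k (- t)) = Rintegral Leb `[0, 2^-1[ (W k (k + - t)).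
  apply: Wshift => //; [ring|by field|lra].
have Sh3 : Rintegral Leb `[3 / 2, 2[ (W k (- t)) = Rintegral Leb `[2^-1, 1[ (W k (k + - t)).
  apply: Wshift => //.
  by field.
have C1 : Rintegral Leb `[0, 2^-1[ (W k 0) + Rintegral Leb `[0, 2^-1[ (W k (k + 0)) =
    Rintegral Leb `[0, 2^-1[ (W k (k + - t)).
  rewrite -RintegralD //; [|apply: (Wi k 0) => //; lra|apply: (Wi k (k + 0)) => //; lra].
  apply: eq_Rintegral => x _; rewrite /W -mulrDl; congr (_ * _).
  have := c1 (k * x + 0).
  rewrite (_ : k * x + 0 + 2 * (pi / 3) = k * x + (k + 0)); last by rewrite /k; field.
  by rewrite (_ : k * x + 0 + pi / 3 = k * x + (k + - t)); last by rewrite /k /t; field.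
have C2 : Rintegral Leb `[2^-1, 1[ (W k 0) = Rintegral Leb `[2^-1, 1[ (W k (- t))
    + Rintegral Leb `[2^-1, 1[ (W k (k + - t)).
  rewrite -RintegralD //; [|exact: Wi|exact: Wi].
  apply: eq_Rintegral => x _; rewrite /W -mulrDl; congr (_ * _).
  have := c2 (k * x + 0).
  rewrite (_ : k * x + 0 - pi / 3 = k * x + - t); last by rewrite /t; ring.
  by rewrite (_ : k * x + 0 + pi / 3 = k * x + (k + - t)); last by rewrite /k /t; field.
have : 3 / 2 * Rintegral Leb `[0, 1[ (fun x => c (pi * x) * g (3 / 2 * x)) =
    3 / 2 * Rintegral Leb `[0, 1[ (fun x => c (pi * x) * g (3 / 2 * x + 2^-1)).
  rewrite -E1 -E2 S1 S2 Sh1 Sh2 Sh3 C2 -C1; ring.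
move=> H; have hnz : (3 / 2 : R) != 0 by lra.
exact: (mulfI hnz H).
Qed.

Lemma gcomp_int a b : 0 < a -> 0 <= b -> a + b <= 2 ->
  Leb.-integrable `[0, 1[ (EFin \o (fun x => g (a * x + b))).
Proof.
move=> a0 b0 ab.
apply: (@int_cv _ a b 0 1 b (a + b)) => //; [ring|ring|].
exact: gi_sub.
Qed.

Lemma i_half1 : Leb.-integrable `[0, 1[ (EFin \o (fun x => g (x / 2))).
Proof.
have := @gcomp_int (2^-1) 0 ltac:(by rewrite invr_gt0) (lexx 0) ltac:(lra).
by apply: eq_integrable => // x _ /=; rewrite addr0 mulrC.
Qed.

Lemma i_half2 : Leb.-integrable `[0, 1[ (EFin \o (fun x => g ((x + 1) / 2))).
Proof.
have := @gcomp_int (2^-1) (2^-1) ltac:(by rewrite invr_gt0) ltac:(lra) ltac:(lra).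
by apply: eq_integrable => // x _ /=; rewrite mulrDl mul1r mulrC.
Qed.

Lemma wmul_int (w h : R -> R) : measurable_fun setT w -> (forall y, `|w y| <= 1) ->
  Leb.-integrable `[0, 1[ (EFin \o h) ->
  Leb.-integrable `[0, 1[ (EFin \o (fun x => w x * h x)).
Proof.
move=> wm wb ih.
have mh : measurable_fun (`[0, 1[ : set R) w by apply: measurable_funTS.
have bh : [bounded w x | x in (`[0, 1[ : set R)].
  exists 1; split; first exact: num_real.
  move=> M /ltW M1 x _; exact: le_trans (wb _) M1.
have := @integrableMr _ _ _ Leb `[0, 1[ (measurable_itv _) w (EFin \o h) mh bh ih.
by apply: eq_integrable => //= x _.
Qed.

Lemma i_w1 (w : R -> R) : measurable_fun setT w -> (forall y, `|w y| <= 1) ->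
  Leb.-integrable `[0, 1[ (EFin \o (fun x => w x * g (3 / 2 * x))).
Proof.
move=> wm wb; apply: wmul_int => //.
have := @gcomp_int (3 / 2) 0 ltac:(lra) (lexx 0) ltac:(lra).
by apply: eq_integrable => // x _ /=; rewrite addr0.
Qed.

Lemma i_w2 (w : R -> R) : measurable_fun setT w -> (forall y, `|w y| <= 1) ->
  Leb.-integrable `[0, 1[ (EFin \o (fun x => w x * g (3 / 2 * x + 2^-1))).
Proof.
move=> wm wb; apply: wmul_int => //.
exact: (@gcomp_int (3 / 2) (2^-1) ltac:(lra) ltac:(lra) ltac:(lra)).
Qed.
End Per.
From HB Require Import structures.
From mathcomp Require Import all_boot all_order all_algebra.
From mathcomp Require Import all_classical all_reals all_analysis.
From mathcomp Require Import complex.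
From mathcomp Require Import lra ring measurable_realfun.
Set Implicit Arguments. Unset Strict Implicit. Unset Printing Implicit Defensive.
Import Order.TTheory GRing.Theory Num.Theory.
Import numFieldNormedType.Exports.
Local Open Scope classical_set_scope.
Local Open Scope ring_scope.

Lemma ReT (R : realType) (f : R -> R[i]) (x : R) :
  complex.Re (collatzT f x) = 2^-1 * ((complex.Re (f (x / 2)) + complex.Re (f ((x + 1) / 2))) +
    ((cos (pi * x) * complex.Re (f (3 / 2 * x)) - cos (pi * x) * complex.Re (f (3 / 2 * x + 2^-1)))
     + (-1) * (sin (pi * x) * complex.Im (f (3 / 2 * x)) - sin (pi * x) * complex.Im (f (3 / 2 * x + 2^-1))))).
Proof.
rewrite /collatzT /cexpi.
have -> : 3 * x / 2 = 3 / 2 * x by rewrite mulrAC.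
have -> : (3 * x + 1) / 2 = 3 / 2 * x + 2^-1 by rewrite mulrDl mulrAC mul1r.
case: (f (x / 2)) => a1 b1; case: (f ((x + 1) / 2)) => a2 b2.
case: (f (3 / 2 * x)) => a3 b3; case: (f (3 / 2 * x + 2^-1)) => a4 b4.
rewrite /=; ring.
Qed.

Lemma ImT (R : realType) (f : R -> R[i]) (x : R) :
  complex.Im (collatzT f x) = 2^-1 * ((complex.Im (f (x / 2)) + complex.Im (f ((x + 1) / 2))) +
    ((cos (pi * x) * complex.Im (f (3 / 2 * x)) - cos (pi * x) * complex.Im (f (3 / 2 * x + 2^-1)))
     + 1 * (sin (pi * x) * complex.Re (f (3 / 2 * x)) - sin (pi * x) * complex.Re (f (3 / 2 * x + 2^-1))))).
Proof.
rewrite /collatzT /cexpi.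
have -> : 3 * x / 2 = 3 / 2 * x by rewrite mulrAC.
have -> : (3 * x + 1) / 2 = 3 / 2 * x + 2^-1 by rewrite mulrDl mulrAC mul1r.
case: (f (x / 2)) => a1 b1; case: (f ((x + 1) / 2)) => a2 b2.
case: (f (3 / 2 * x)) => a3 b3; case: (f (3 / 2 * x + 2^-1)) => a4 b4.
rewrite /=; ring.
Qed.

Section Fin.
Context {R : realType}.
Local Notation Leb := (@lebesgue_measure R).
Local Notation I01 F := (Rintegral Leb `[0, 1[ F).

Lemma intD' (F G : R -> R) : Leb.-integrable `[0, 1[ (EFin \o F) ->
  Leb.-integrable `[0, 1[ (EFin \o G) ->
  Leb.-integrable `[0, 1[ (EFin \o (fun x => F x + G x)).
Proof.
move=> iF iG; have := @integrableD _ _ _ Leb _ (measurable_itv _) _ _ iF iG.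
by apply: eq_integrable => // x _ /=; rewrite EFinD.
Qed.

Lemma intB' (F G : R -> R) : Leb.-integrable `[0, 1[ (EFin \o F) ->
  Leb.-integrable `[0, 1[ (EFin \o G) ->
  Leb.-integrable `[0, 1[ (EFin \o (fun x => F x - G x)).
Proof.
move=> iF iG; have := @integrableB _ _ _ Leb _ (measurable_itv _) _ _ iF iG.
by apply: eq_integrable => // x _ /=; rewrite EFinB.
Qed.

Lemma intZ' (k : R) (F : R -> R) : Leb.-integrable `[0, 1[ (EFin \o F) ->
  Leb.-integrable `[0, 1[ (EFin \o (fun x => k * F x)).
Proof.
move=> iF; have := @integrableZl _ _ _ Leb _ (measurable_itv _) k _ iF.
by apply: eq_integrable => // x _ /=; rewrite EFinM.
Qed.

Lemma lin6 (F1 F2 F3 F4 F5 F6 : R -> R) (s : R) :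
  Leb.-integrable `[0, 1[ (EFin \o F1) -> Leb.-integrable `[0, 1[ (EFin \o F2) ->
  Leb.-integrable `[0, 1[ (EFin \o F3) -> Leb.-integrable `[0, 1[ (EFin \o F4) ->
  Leb.-integrable `[0, 1[ (EFin \o F5) -> Leb.-integrable `[0, 1[ (EFin \o F6) ->
  I01 (fun x => 2^-1 * ((F1 x + F2 x) + ((F3 x - F4 x) + s * (F5 x - F6 x)))) =
  2^-1 * ((I01 F1 + I01 F2) + ((I01 F3 - I01 F4) + s * (I01 F5 - I01 F6))).
Proof.
move=> i1 i2 i3 i4 i5 i6.
have i12 := intD' i1 i2. have i34 := intB' i3 i4. have i56 := intB' i5 i6.
have i56s := intZ' s i56. have i3456 := intD' i34 i56s.
rewrite RintegralZl //; last exact: intD'.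
rewrite RintegralD // RintegralD // RintegralD // RintegralZl // !RintegralB //.
Qed.
End Fin.

Section Trig.
Context {R : realType}.

Lemma cos_pi3 : cos (pi / 3 : R) = 2^-1.
Proof.
have hp := @pi_gt0 R.
have c0 : 0 < cos (pi / 3 : R).
  by apply: cos_gt0_pihalf; apply/andP; split; lra.
have e1 : cos (pi - pi / 3 : R) = - cos (pi / 3) by rewrite cosB cospi sinpi; ring.
have e2 : cos (pi - pi / 3 : R) = 2 * cos (pi / 3) ^+ 2 - 1.
  rewrite (_ : pi - pi / 3 = pi / 3 + pi / 3); last by field.
  rewrite cosD -!expr2 sin2cos2; ring.
move: c0 e1 e2; set c := cos (pi / 3) => c0 e1 e2.
have : (2 * c - 1) * (c + 1) = 0 by rewrite e1 in e2; nra.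
move=> /eqP; rewrite mulf_eq0 => /orP[|]; first by rewrite subr_eq0 => /eqP h; lra.
rewrite addr_eq0 => /eqP h; lra.
Qed.

Lemma cos_id2 (z : R) : cos (z - pi / 3) + cos (z + pi / 3) = cos z.
Proof. by rewrite cosB cosD cos_pi3; field. Qed.

Lemma sin_id2 (z : R) : sin (z - pi / 3) + sin (z + pi / 3) = sin z.
Proof. by rewrite sinB sinD cos_pi3; field. Qed.
End Trig.
From HB Require Import structures.
From mathcomp Require Import all_boot all_order all_algebra.
From mathcomp Require Import all_classical all_reals all_analysis.
From mathcomp Require Import complex.
From mathcomp Require Import lra ring measurable_realfun.
Set Implicit Arguments. Unset Strict Implicit. Unset Printing Implicit Defensive.
Import Order.TTheory GRing.Theory Num.Theory.
Import numFieldNormedType.Exports.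
Local Open Scope classical_set_scope.
Local Open Scope ring_scope.

Theorem mainTheorem5 (R : realType) (f : R -> R[i]) :
  L2_circle f -> circle_integral (collatzT f) = circle_integral f.
Proof.
move=> [fP [um [vm i2]]].
have uP : forall x, complex.Re (f (x + 1)) = complex.Re (f x) by move=> x; rewrite fP.
have vP : forall x, complex.Im (f (x + 1)) = complex.Im (f x) by move=> x; rewrite fP.
have cst1 : (@lebesgue_measure R).-integrable `[0, 1[ (EFin \o (fun _ : R => 1 : R)).
  apply/integrableP; split; first exact: measurable_cst.
  under eq_integral do rewrite /= normr1.
  rewrite integral_cst//= lebesgue_measure_itv/= lte_fin ltr01 mul1e.
  by rewrite -EFinD ltry.
have i2' : (@lebesgue_measure R).-integrable `[0, 1[
    (EFin \o (fun x => 1 + (complex.Re (f x) ^+ 2 + complex.Im (f x) ^+ 2))).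
  exact: intD' cst1 i2.
have ui : (@lebesgue_measure R).-integrable `[0, 1[ (EFin \o (fun x => complex.Re (f x))).
  apply: le_integrable i2' => //.
    by apply/measurable_EFinP; apply: measurable_funTS.
  move=> x _ /=; rewrite lee_fin [X in _ <= X]ger0_norm; last first.
    by apply: addr_ge0 => //; apply: addr_ge0; apply: sqr_ge0.
  rewrite ler_norml; apply/andP; split; nra.
have vi : (@lebesgue_measure R).-integrable `[0, 1[ (EFin \o (fun x => complex.Im (f x))).
  apply: le_integrable i2' => //.
    by apply/measurable_EFinP; apply: measurable_funTS.
  move=> x _ /=; rewrite lee_fin [X in _ <= X]ger0_norm; last first.
    by apply: addr_ge0 => //; apply: addr_ge0; apply: sqr_ge0.
  rewrite ler_norml; apply/andP; split; nra.
have cosm : measurable_fun setT (@cos R) := continuous_measurable_fun (@continuous_cos R).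
have sinm : measurable_fun setT (@sin R) := continuous_measurable_fun (@continuous_sin R).
have pim : measurable_fun setT (fun x : R => pi * x) by exact: measurable_funM.
have cospm : measurable_fun setT (fun x : R => cos (pi * x)) := measurableT_comp cosm pim.
have sinpm : measurable_fun setT (fun x : R => sin (pi * x)) := measurableT_comp sinm pim.
have cosb : forall y : R, `|cos (pi * y)| <= 1 by move=> y; exact: cos_max.
have sinb : forall y : R, `|sin (pi * y)| <= 1 by move=> y; exact: sin_max.
have cos1 : forall y : R, cos y + cos (y + 2 * (pi / 3)) = cos (y + pi / 3).
  move=> y; have := cos_id2 (y + pi / 3); rewrite addrK -addrA.
  by rewrite (_ : pi / 3 + pi / 3 = 2 * (pi / 3)) //; ring.
have sin1 : forall y : R, sin y + sin (y + 2 * (pi / 3)) = sin (y + pi / 3).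
  move=> y; have := sin_id2 (y + pi / 3); rewrite addrK -addrA.
  by rewrite (_ : pi / 3 + pi / 3 = 2 * (pi / 3)) //; ring.
have cos2 : forall y : R, cos y = cos (y - pi / 3) + cos (y + pi / 3).
  by move=> y; rewrite cos_id2.
have sin2 : forall y : R, sin y = sin (y - pi / 3) + sin (y + pi / 3).
  by move=> y; rewrite sin_id2.
rewrite /circle_integral; congr Complex.
- under eq_Rintegral => x _ do rewrite ReT.
  rewrite lin6.
  + rewrite (partA uP um ui).
    rewrite (partB uP um ui cosm (@cos_max R) cos1 cos2).
    rewrite (partB vP vm vi sinm (@sin_max R) sin1 sin2).
    by field.
  + exact: (i_half1 uP um ui).
  + exact: (i_half2 uP um ui).
  + exact: (i_w1 uP um ui cospm cosb).
  + exact: (i_w2 uP um ui cospm cosb).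
  + exact: (i_w1 vP vm vi sinpm sinb).
  + exact: (i_w2 vP vm vi sinpm sinb).
- under eq_Rintegral => x _ do rewrite ImT.
  rewrite lin6.
  + rewrite (partA vP vm vi).
    rewrite (partB vP vm vi cosm (@cos_max R) cos1 cos2).
    rewrite (partB uP um ui sinm (@sin_max R) sin1 sin2).
    by field.
  + exact: (i_half1 vP vm vi).
  + exact: (i_half2 vP vm vi).
  + exact: (i_w1 vP vm vi cospm cosb).
  + exact: (i_w2 vP vm vi cospm cosb).
  + exact: (i_w1 uP um ui sinpm sinb).
  + exact: (i_w2 uP um ui sinpm sinb).
Qed.
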